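(* Let $a\neq b$ be letters and $w=a^{n_1}b^{n_2}$ with $n_1,n_2\ge1$. Then every element of $\mathtt{BR}(w)$ is rich.
   Context: For a word $w=w_1\cdots w_n$, $w^R=w_n\cdots w_1$; $w$ is a palindrome if $w=w^R$; a factor of $w$ is a word $u$ with $w=puq$. A word $w$ is rich if the number of distinct nonempty palindromic factors of $w$ equals $|w|$. The block reversal of a nonempty word $w$ is $\mathtt{BR}(w)=\{B_t\cdots B_1 : w=B_1\cdots B_t,\ t\ge1,\ \text{each } B_i \text{ nonempty}\}$. *)

(* Defs.v *)
From mathcomp Require Import all_boot.
Set Implicit Arguments. Unset Strict Implicit. Unset Printing Implicit Defensive.

Section Words.
Variable T : eqType.

Definition palindrome (w : seq T) : bool := w == rev w.

Definition all_factors (w : seq T) : seq (seq T) :=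
  [seq drop i (take j w) | i <- iota 0 (size w).+1, j <- iota 0 (size w).+1].

Definition pal_factors (w : seq T) : seq (seq T) :=
  undup [seq u <- all_factors w | (u != [::]) && palindrome u].

Definition rich (w : seq T) : Prop := size (pal_factors w) = size w.

Definition in_BR (w v : seq T) : Prop :=
  exists Bs : seq (seq T),
    [/\ Bs != [::], all (fun B => B != [::]) Bs, w = flatten Bs & v = flatten (rev Bs)].

End Words.

(* Main.v *)
Require Import Defs.
From mathcomp Require Import all_boot zify.

Section S.
Variable T : eqType.
Implicit Types (u w s : seq T).

Lemma mem_all_factors u w : (u \in all_factors w) = infix u w.
Proof.
apply/idP/idP.
  case/allpairsP=> [[i j] [_ _ ->]] /=.
  exact: infix_trans (suffixW (suffix_drop _ _)) (infix_take _ _).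
case/infixP=> [s [s' ->]].
apply/allpairsP; exists (size s, size s + size u); split.
- rewrite mem_iota !size_cat /=; lia.
- rewrite mem_iota !size_cat /=; lia.
by rewrite /= takeD take_size_cat // !drop_size_cat // take_size_cat.
Qed.

Lemma mem_pal u w : (u \in pal_factors w) = [&& u != [::], palindrome u & infix u w].
Proof. by rewrite /pal_factors mem_undup mem_filter mem_all_factors andbA. Qed.

Lemma take_rcons' n t (x : T) : n <= size t -> take n (rcons t x) = take n t.
Proof.
move=> h; rewrite -cats1 take_cat; case: ltnP => // h2.
have -> : n = size t by lia.
by rewrite subnn take0 cats0 take_size.
Qed.

Lemma pal_upper w : size (pal_factors w) <= size w.
Proof.
elim/last_ind: w => [|w x IH].
  by [].
set s := rcons w x.
have hex : exists k, (k < size s) && palindrome (drop k s).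
  exists (size w); rewrite /s size_rcons ltnSn /= drop_rcons // drop_size /palindrome /= eqxx //.
case: (ex_minnP hex) => k /andP[ks pk] kmin.
set L := drop k s.
have sub : {subset pal_factors s <= L :: pal_factors w}.
  move=> u; rewrite mem_pal => /and3P[u0 pu]; rewrite infix_rconsl.
  case/orP=> [/suffixP [s2 es]|iw]; last by rewrite inE mem_pal u0 pu iw orbT.
  have eu : u = drop (size s2) s by rewrite /s es drop_size_cat.
  have k2 : size s2 < size s.
    move: u0; rewrite /s es size_cat; by case: (u) => //= *; lia.
  have kk : k <= size s2 by apply: kmin; rewrite k2 -eu pu.
  rewrite inE; have [lt|eqk] : k < size s2 \/ k = size s2 by lia.
    2: by rewrite eu -eqk eqxx.
  apply/orP; right; rewrite mem_pal u0 pu /=.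
  have hs : size s = (size w).+1 by rewrite size_rcons.
  have eL : L = rcons (drop k w) x by rewrite /L /s drop_rcons //; lia.
  have eu2 : u = drop (size s2 - k) L by rewrite /L drop_drop subnK // ?eu //; lia.
  have pL : L = rev L by apply/eqP.
  have pu' : u = rev u by apply/eqP.
  have : u = take (size L - (size s2 - k)) L.
    by rewrite pu' eu2 rev_drop -pL.
  rewrite {2}eL take_rcons'; last by rewrite eL size_rcons size_drop; lia.
  move=> ->; exact: infix_trans (infix_take _ _) (suffixW (suffix_drop _ _)).
have := uniq_leq_size (undup_uniq _) sub.
rewrite /s size_rcons /= => h; apply: leq_trans h _; by rewrite ltnS.
Qed.

Lemma infix_nseq m n (c : T) : m <= n -> infix (nseq m c) (nseq n c).
Proof. by move=> h; rewrite -(subnKC h) nseqD prefix_infix. Qed.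

Section Lower.
Variables (x y : T) (p i j q : nat).
Hypotheses (xy : x != y) (i0 : 0 < i) (j0 : 0 < j).
Let v := nseq p x ++ nseq i y ++ nseq j x ++ nseq q y.
Let L1 := [seq nseq k.+1 x | k <- iota 0 (maxn p j)].
Let L2 := [seq nseq k.+1 y | k <- iota 0 (maxn i q)].
Let L3 := [seq nseq k.+1 x ++ nseq i y ++ nseq k.+1 x | k <- iota 0 (minn p j)].
Let L4 := [seq nseq k.+1 y ++ nseq j x ++ nseq k.+1 y | k <- iota 0 (minn i q)].
Let key u := (head x u == x, y \in u, x \in u).

Let yx : (y == x) = false.
Proof. by apply/negbTE; rewrite eq_sym. Qed.

Lemma key1 u : u \in L1 -> key u = (true, false, true).
Proof. case/mapP=> k _ ->; rewrite /key /= !(inE, mem_cat, mem_nseq) eqxx yx ?(negbTE xy) ?i0 ?j0 /= ?orbT ?andbF //. Qed.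
Lemma key2 u : u \in L2 -> key u = (false, true, false).
Proof. case/mapP=> k _ ->; rewrite /key /= !(inE, mem_cat, mem_nseq) eqxx yx ?(negbTE xy) ?i0 ?j0 /= ?orbT ?andbF //. Qed.
Lemma key3 u : u \in L3 -> key u = (true, true, true).
Proof. case/mapP=> k _ ->; rewrite /key /= !(inE, mem_cat, mem_nseq) eqxx yx ?(negbTE xy) ?i0 ?j0 /= ?orbT ?andbF ?eqxx ?orbT //. Qed.
Lemma key4 u : u \in L4 -> key u = (false, true, true).
Proof. case/mapP=> k _ ->; rewrite /key /= !(inE, mem_cat, mem_nseq) eqxx yx ?(negbTE xy) ?i0 ?j0 /= ?orbT ?andbF ?eqxx ?orbT //. Qed.

Lemma disj {A B : seq (seq T)} {kA kB} :
  (forall u, u \in A -> key u = kA) -> (forall u, u \in B -> key u = kB) ->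
  kA != kB -> ~~ has (mem A) B.
Proof.
move=> hA hB ne; apply/hasPn => u uB; apply/negP => uA.
by move: ne; rewrite -(hA _ uA) -(hB _ uB) eqxx.
Qed.

Lemma size_nseq_inj (c : T) : injective (fun k => nseq k.+1 c).
Proof. by move=> k1 k2 /(congr1 size); rewrite !size_nseq => -[]. Qed.

Lemma uniqL : uniq (L1 ++ L2 ++ L3 ++ L4).
Proof.
rewrite !cat_uniq !has_cat !negb_or.
rewrite (disj key1 key2) ?(disj key1 key3) ?(disj key1 key4) ?(disj key2 key3)
  ?(disj key2 key4) ?(disj key3 key4) //.
rewrite !map_inj_uniq ?iota_uniq //.
- by move=> k1 k2 /(congr1 size); rewrite !size_cat !size_nseq; lia.
- by move=> k1 k2 /(congr1 size); rewrite !size_cat !size_nseq; lia.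
- exact: size_nseq_inj.
- exact: size_nseq_inj.
Qed.

Lemma subL : {subset L1 ++ L2 ++ L3 ++ L4 <= pal_factors v}.
Proof.
move=> u; rewrite !mem_cat mem_pal => /or4P[] /mapP[k]; rewrite mem_iota add0n => /andP[_ kl] ->.
- apply/and3P; split; [by [] | by rewrite /palindrome rev_nseq |].
  have [kp|kj] : k < p \/ k < j by lia.
    by apply: infix_catr; apply: infix_nseq.
  by apply: infix_catl; apply: infix_catl; apply: infix_catr; apply: infix_nseq.
- apply/and3P; split; [by [] | by rewrite /palindrome rev_nseq |].
  have [kp|kj] : k < i \/ k < q by lia.
    by apply: infix_catl; apply: infix_catr; apply: infix_nseq.
  by apply: infix_catl; apply: infix_catl; apply: infix_catl; apply: infix_nseq.
- apply/and3P; split; [by [] | by rewrite /palindrome !rev_cat !rev_nseq catA |].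
  apply/infixP; exists (nseq (p - k.+1) x), (nseq (j - k.+1) x ++ nseq q y).
  have ep : nseq p x = nseq (p - k.+1) x ++ nseq k.+1 x by rewrite -nseqD subnK //; lia.
  have ej : nseq j x = nseq k.+1 x ++ nseq (j - k.+1) x by rewrite -nseqD subnKC //; lia.
  by rewrite /v ep ej -!catA.
- apply/and3P; split; [by [] | by rewrite /palindrome !rev_cat !rev_nseq catA |].
  apply/infixP; exists (nseq p x ++ nseq (i - k.+1) y), (nseq (q - k.+1) y).
  have ep : nseq i y = nseq (i - k.+1) y ++ nseq k.+1 y by rewrite -nseqD subnK //; lia.
  have ej : nseq q y = nseq k.+1 y ++ nseq (q - k.+1) y by rewrite -nseqD subnKC //; lia.
  by rewrite /v ep ej -!catA.
Qed.

Lemma rich_form : rich v.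
Proof.
apply/eqP; rewrite eqn_leq pal_upper /=.
have := uniq_leq_size uniqL subL.
rewrite !size_cat !size_map !size_iota !size_nseq.
have h1 := addn_min_max p j; have h2 := addn_min_max i q.
move: h1 h2; set P := size _; set a1 := minn p j; set a2 := maxn p j; set a3 := minn i q; set a4 := maxn i q.
move=> e1 e2 h; clearbody P a1 a2 a3 a4; clear -e1 e2 h.
lia.
Qed.
End Lower.


Lemma cat_nseq s1 s2 n (c : T) : s1 ++ s2 = nseq n c ->
  [/\ s1 = nseq (size s1) c, s2 = nseq (size s2) c & size s1 + size s2 = n].
Proof.
move=> e.
have h : all (pred1 c) (nseq n c) by apply/all_pred1P; rewrite size_nseq.
have hs := congr1 size e; rewrite size_cat size_nseq in hs.
by move: h; rewrite -e all_cat => /andP[/all_pred1P h1 /all_pred1P h2].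
Qed.

Lemma flatten_rev_cons (B : seq T) Bs : flatten (rev (B :: Bs)) = flatten (rev Bs) ++ B.
Proof. by rewrite rev_cons -cats1 flatten_cat /= cats0. Qed.

Lemma flat_const Bs n (c : T) : flatten Bs = nseq n c -> flatten (rev Bs) = nseq n c.
Proof.
elim: Bs n => [|B Bs IH] n /=.
  by move=> e; have := congr1 size e; rewrite size_nseq /= => <-.
move=> /cat_nseq [e1 e2 <-]; rewrite flatten_rev_cons (IH _ e2) e1 -nseqD addnC.
by rewrite size_nseq.
Qed.

Lemma BR_form (a b : T) (Bs : seq (seq T)) n1 n2 :
  flatten Bs = nseq n1 a ++ nseq n2 b ->
  flatten (rev Bs) = nseq n2 b ++ nseq n1 a \/
  exists i j, [/\ 0 < i <= n1, 0 < j <= n2 &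
    flatten (rev Bs) = nseq (n2 - j) b ++ nseq i a ++ nseq j b ++ nseq (n1 - i) a].
Proof.
elim: Bs n1 => [|B Bs IH] n1 /=.
  move=> e; have := congr1 size e; rewrite size_cat !size_nseq /= => h.
  have -> : n1 = 0 by lia.
  have -> : n2 = 0 by lia.
  by left.
rewrite flatten_rev_cons => e.
case: (leqP (size B) n1) => hB.
  have en : nseq n1 a = nseq (size B) a ++ nseq (n1 - size B) a by rewrite -nseqD subnKC.
  rewrite en -catA in e; move/eqP: e; rewrite eqseq_cat ?size_nseq // => /andP[/eqP eB /eqP eF].
  case: (IH _ eF) => [->|[i [j [hi hj ->]]]].
    by left; rewrite -catA eB -nseqD size_nseq subnK.
  right; exists i, j; split => //; first lia.
  rewrite eB -!catA -nseqD size_nseq; congr (_ ++ _ ++ _ ++ nseq _ a); lia.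
move: e; rewrite -(cat_take_drop n1 B) -catA => /eqP.
rewrite eqseq_cat ?size_nseq ?size_takel //; last exact: ltnW.
case/andP => /eqP eT /eqP /cat_nseq [eD eF hs].
have hm : 0 < size (drop n1 B) by rewrite size_drop; lia.
rewrite (@flat_const _ _ _ eF) eT eD.
case: (posnP n1) => [n10|n1p].
  left; subst n1; rewrite /= cats0 -nseqD; congr (nseq _ _); lia.
right; exists n1, (size (drop n1 B)); split; [lia|lia|].
rewrite subnn /= cats0; congr (nseq _ b ++ _); lia.
Qed.

End S.

Theorem mainTheorem6 (T : eqType) (a b : T) (n1 n2 : nat) :
  a != b -> 1 <= n1 -> 1 <= n2 ->
  forall v : seq T, in_BR (nseq n1 a ++ nseq n2 b) v -> rich v.
Proof.
move=> ab h1 h2 v [Bs [_ _ ew ->]].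
case: (@BR_form _ a b Bs n1 n2 (esym ew)) => [->|[i [j [/andP[i0 _] /andP[j0 _] ->]]]].
  by have := @rich_form _ a b 0 n2 n1 0 ab h2 h1; rewrite /= cats0.
have ba : b != a by rewrite eq_sym.
exact: (@rich_form _ b a (n2 - j) i j (n1 - i) ba i0 j0).
Qed.
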